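(* Let $A\in\mathbb{R}^{m\times n}$ with $m<n$, let $B$ be a matrix whose columns form a basis of the null space of $A$, let $T\subseteq\{1,\dots,n\}$ and let $\sigma\in\{-1,+1\}^T$ be a fixed sign pattern. Then every $\mathbf{x}\in\mathbb{R}^n$ with support exactly $T$ and $\operatorname{sgn}(x_i)=\sigma_i$ for $i\in T$ is the unique solution of the $\ell_0$-minimization problem $\min\{\|\mathbf{v}\|_0 : A\mathbf{v}=A\mathbf{x}\}$ if and only if $$\|B_{T^-}\mathbf{z}\|_0<\|B_{T^c}\mathbf{z}\|_0$$ for every nonzero vector $\mathbf{z}$, where $T^-=\{i\in T:(B\mathbf{z})_i\sigma_i<0\}$.
   Context: $\|\mathbf{v}\|_0=|\{i:v_i\neq0\}|$. For an index set $S$, $B_S$ is the submatrix of $B$ formed by rows indexed by $S$; $T^c=\{1,\dots,n\}\setminus T$. *)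

(* Defs.v *)
From HB Require Import structures.
From mathcomp Require Import all_boot all_order all_algebra.
Set Implicit Arguments. Unset Strict Implicit. Unset Printing Implicit Defensive.
Import Order.TTheory GRing.Theory Num.Theory.
Local Open Scope ring_scope.

Definition norm0 (R : nzRingType) (n : nat) (v : 'cV[R]_n) : nat :=
  #|[set i | v i ord0 != 0]|.

(* ||v_S||_0 : the l0 "norm" of the subvector of v indexed by S
   (so ||B_S z||_0 = norm0_on S (B *m z)). *)
Definition norm0_on (R : nzRingType) (n : nat) (S : {set 'I_n}) (v : 'cV[R]_n) : nat :=
  #|[set i in S | v i ord0 != 0]|.

Definition unique_l0_solution (R : nzRingType) (m n : nat)
    (A : 'M[R]_(m, n)) (x : 'cV[R]_n) : Prop :=
  forall v : 'cV[R]_n, A *m v = A *m x -> v != x -> (norm0 x < norm0 v)%N.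

Definition null_space_basis (R : nzRingType) (m n k : nat)
    (A : 'M[R]_(m, n)) (B : 'M[R]_(n, k)) : Prop :=
  [/\ A *m B = 0,
      (forall v : 'cV[R]_n, A *m v = 0 -> exists z : 'cV[R]_k, v = B *m z)
    & (forall z : 'cV[R]_k, B *m z = 0 -> z = 0)].

(* Main.v *)
Require Import Defs.
From HB Require Import structures.
From mathcomp Require Import all_boot all_order all_algebra.
Import Order.TTheory GRing.Theory Num.Theory.
Local Open Scope ring_scope.

Lemma norm0_split (R : nzRingType) n (T : {set 'I_n}) (u : 'cV[R]_n) :
  norm0 u = (norm0_on T u + norm0_on (~: T) u)%N.
Proof.
rewrite /norm0 /norm0_on -(cardsID T [set i | u i ord0 != 0]).
have -> : [set i | u i ord0 != 0] :&: T = [set i in T | u i ord0 != 0].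
  by apply/setP => i; rewrite !inE andbC.
have -> // : [set i | u i ord0 != 0] :\: T = [set i in ~: T | u i ord0 != 0].
by apply/setP => i; rewrite !inE andbC.
Qed.

Arguments norm0_split {R n} T u.

Lemma sg_pos (R : realFieldType) (x s : R) :
  s = 1 \/ s = -1 -> Num.sg x = s -> 0 < x * s.
Proof.
move=> [->|->] h.
- by rewrite mulr1 -(sgr_cp0 x).1.1 h.
- by rewrite mulrN1 oppr_gt0 -(sgr_cp0 x).1.2 h.
Qed.

Lemma sg_negw (R : realFieldType) (w s : R) :
  s = 1 \/ s = -1 -> w * s < 0 -> Num.sg (- w) = s.
Proof.
move=> [->|->] h.
- apply/eqP; rewrite (sgr_cp0 _).1.1 oppr_gt0; by rewrite mulr1 in h.
- apply/eqP; rewrite (sgr_cp0 _).1.2 oppr_lt0; by rewrite mulrN1 oppr_lt0 in h.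
Qed.

Theorem theorem4 (R : realFieldType) (m n k : nat)
    (A : 'M[R]_(m, n)) (B : 'M[R]_(n, k))
    (T : {set 'I_n}) (sigma : 'I_n -> R) :
  (m < n)%N ->
  null_space_basis A B ->
  (forall i, i \in T -> sigma i = 1 \/ sigma i = -1) ->
  (forall x : 'cV[R]_n,
      [set i | x i ord0 != 0] = T ->
      (forall i, i \in T -> Num.sg (x i ord0) = sigma i) ->
      unique_l0_solution A x)
  <->
  (forall z : 'cV[R]_k, z != 0 ->
      (norm0_on [set i in T | ((B *m z) i ord0 * sigma i < 0)%R] (B *m z)
       < norm0_on (~: T) (B *m z))%N).
Proof.
move=> _ [AB0 Hker Binj] Hs.
have TmE : forall w : 'cV[R]_n,
    norm0_on [set i in T | (w i ord0 * sigma i < 0)%R] w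
    = #|[set i in T | (w i ord0 * sigma i < 0)%R]|.
  move=> w; rewrite /norm0_on; apply: eq_card => i; rewrite !inE.
  case: (i \in T) => //=; have [->|nz] := eqVneq (w i ord0) 0; by rewrite ?mul0r ?ltxx ?nz ?andbT.
have cardT : forall w : 'cV[R]_n,
    #|T| = (#|[set i in T | (w i ord0 * sigma i < 0)%R]|
             + #|T :\: [set i in T | (w i ord0 * sigma i < 0)%R]|)%N.
  move=> w.
  have sub : [set i in T | (w i ord0 * sigma i < 0)%R] \subset T.
    by apply/subsetP => i; rewrite inE; case/andP.
  by rewrite -(cardsID [set i in T | (w i ord0 * sigma i < 0)%R] T) (setIidPr sub).
split.
- move=> H z z0.
  set w := B *m z.
  set Tm := [set i in T | (w i ord0 * sigma i < 0)%R].
  pose x : 'cV[R]_n := \col_i (if i \in Tm then - w i ord0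
                               else if i \in T then sigma i else 0).
  have xE : forall i, x i ord0 = (if i \in Tm then - w i ord0
                               else if i \in T then sigma i else 0).
    by move=> i; rewrite mxE.
  have TmT : forall i, i \in Tm -> i \in T by move=> i; rewrite inE; case/andP.
  have Tmw : forall i, i \in Tm -> w i ord0 * sigma i < 0
    by move=> i; rewrite inE; case/andP.
  have suppx : [set i | x i ord0 != 0] = T.
    apply/setP => i; rewrite inE xE.
    case: ifP => iTm.
    + rewrite TmT // oppr_eq0; apply/negP => /eqP w0.
      by move: (Tmw _ iTm); rewrite w0 mul0r ltxx.
    + case: ifP => iT; last by rewrite eqxx.
      by case: (Hs i iT) => ->; rewrite ?oppr_eq0 oner_eq0.
  have sgx : forall i, i \in T -> Num.sg (x i ord0) = sigma i.
    move=> i iT; rewrite xE; case: ifP => iTm.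
    + exact: sg_negw (Hs i iT) (Tmw i iTm).
    + by rewrite iT; case: (Hs i iT) => ->; rewrite ?sgr1 ?sgrN1.
  have := H x suppx sgx (x + w).
  rewrite mulmxDr /w mulmxA AB0 mul0mx addr0 => /(_ erefl).
  have nx : x + B *m z != x.
    apply/negP => /eqP e; move/negP: z0; apply; apply/eqP; apply: Binj.
    by apply: (addrI x); rewrite addr0.
  move=> /(_ nx); rewrite -/w.
  have addE : forall i, (x + w) i ord0 = x i ord0 + w i ord0.
    by move=> i; rewrite mxE.
  rewrite (norm0_split T (x + w)) /norm0 suppx TmE (cardT w) -/Tm.
  have e1 : norm0_on (~: T) (x + w) = norm0_on (~: T) w.
    rewrite /norm0_on; apply: eq_card => i; rewrite !inE addE xE.
    case iT: (i \in T) => //=.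
    rewrite (_ : (i \in Tm) = false) ?add0r //.
    by apply/negbTE/negP => /TmT; rewrite iT.
  have e2 : (norm0_on T (x + w) <= #|T :\: Tm|)%N.
    apply: subset_leq_card; apply/subsetP => i; rewrite inE addE xE.
    case/andP => iT; case: ifP => iTm; first by rewrite addNr eqxx.
    by rewrite in_setD iTm iT.
  rewrite e1 => h; rewrite -(ltn_add2r #|T :\: Tm|).
  apply: (leq_trans h); rewrite addnC leq_add2l; exact: e2.
- move=> H x suppx sgx v Av nv.
  have : A *m (v - x) = 0 by rewrite mulmxBr Av subrr.
  case/Hker => z vE.
  have z0 : z != 0.
    apply/negP => /eqP z0; move: vE; rewrite z0 mulmx0 => /eqP.
    by rewrite subr_eq0 (negbTE nv).
  have := H z z0; rewrite -vE.
  have -> : v = x + (v - x) by rewrite addrC subrK.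
  rewrite addrC addKr.
  set w := v - x.
  set Tm := [set i in T | (w i ord0 * sigma i < 0)%R].
  have addE : forall i, (x + w) i ord0 = x i ord0 + w i ord0.
    by move=> i; rewrite mxE.
  rewrite TmE (norm0_split T (x + w)) /norm0 suppx (cardT w) -/Tm => h.
  have e1 : norm0_on (~: T) (x + w) = norm0_on (~: T) w.
    rewrite /norm0_on; apply: eq_card => i; rewrite !inE addE.
    case iT: (i \in T) => //=.
    have : i \notin [set i | x i ord0 != 0] by rewrite suppx iT.
    by rewrite inE negbK => /eqP ->; rewrite add0r.
  have e2 : (#|T :\: Tm| <= norm0_on T (x + w))%N.
    apply: subset_leq_card; apply/subsetP => i; rewrite !inE addE.
    case/andP => nTm iT; rewrite iT /=; rewrite iT /= in nTm.
    apply/negP => /eqP e.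
    have wE : w i ord0 = - x i ord0 by apply/eqP; rewrite -addr_eq0 addrC e.
    move/negP: nTm; apply; rewrite wE mulNr oppr_lt0.
    exact: sg_pos (Hs i iT) (sgx i iT).
  rewrite e1; apply: (leq_trans _ (leq_add e2 (leqnn _))).
  by rewrite addnC ltn_add2l.
Qed.
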